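(* Let $r\ge1$ and $n\ge 3r$ be integers, let $P$ be the path on $n$ vertices and $G=P^r$ its $r$-th power. Then $\tau(G)=r$. Moreover, for every positive integer $k$ with $n\ge k^2(r+1)$, there is a (simple) coalition game $\mathcal G$ over $G$ with $\dfrac{\kappa(\mathcal G)}{\kappa^f(\mathcal G)}\ge\left(1-\frac2k\right)\tau(G)$.
   Context: The $r$-th power $P^r$ of the path $P$ with vertices $1,\dots,n$ in order is the graph on $\{1,\dots,n\}$ in which $i\ne j$ are adjacent iff $|i-j|\le r$. Coalition game over $G=(V,E)$: a valuation $v:2^V\to\mathbb Z_{\ge0}$ with $v(\emptyset)=0$, $v(S)=0$ whenever $G[S]$ is disconnected, $v$ not identically zero; simple if all values lie in $\{0,1\}$. $\kappa^f(\mathcal G)=\min\{\sum_{i\in V}x_i: x\in\mathbb R^V_{\ge0},\ \sum_{i\in S}x_i\ge v(S)\ \forall S\subseteq V\}$ and $\kappa(\mathcal G)$ the same minimum over $x\in\mathbb Z^V_{\ge0}$. Thicket number $\tau(G)$: maximum, over collections $\mathcal H$ of nonempty, connected-inducing, pairwise intersecting vertex sets, of the minimum size of a set meeting every member of $\mathcal H$. *)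

(* Defs.v *)
From HB Require Import structures.
From mathcomp Require Import all_boot all_order all_algebra.
Set Implicit Arguments. Unset Strict Implicit. Unset Printing Implicit Defensive.
Import Order.TTheory GRing.Theory Num.Theory.

(* A simple graph on a finite vertex type V is given by a symmetric,
   irreflexive boolean relation e. *)

(* The r-th power of the path on n vertices; vertices 0..n-1 (instead of 1..n). *)
Definition path_pow (n r : nat) : rel 'I_n :=
  fun i j => [&& i != j, (i <= j + r)%N & (j <= i + r)%N].
Arguments path_pow : clear implicits.

Definition induced_rel (V : finType) (e : rel V) (S : {set V}) : rel V :=
  fun a b => [&& a \in S, b \in S & e a b].

Definition connectedb (V : finType) (e : rel V) (S : {set V}) : bool :=
  [forall x in S, forall y in S, connect (induced_rel e S) x y].

Definition thicket (V : finType) (e : rel V) (H : {set {set V}}) : bool :=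
  [forall S in H, (S != set0) && connectedb e S] &&
  [forall S in H, forall S' in H, S :&: S' != set0].

Definition hits (V : finType) (H : {set {set V}}) (T : {set V}) : bool :=
  [forall S in H, S :&: T != set0].

Definition hitting_number (V : finType) (H : {set {set V}}) : nat :=
  \big[minn/#|V|]_(T : {set V} | hits H T) #|T|.

Definition thicket_number (V : finType) (e : rel V) : nat :=
  \max_(H : {set {set V}} | thicket e H) hitting_number H.

Definition coalition_game (V : finType) (e : rel V) (v : {set V} -> nat) : Prop :=
  [/\ v set0 = 0%N,
      (forall S : {set V}, ~~ connectedb e S -> v S = 0%N)
    & exists S : {set V}, v S <> 0%N].

Definition simple_game (V : finType) (v : {set V} -> nat) : Prop :=
  forall S : {set V}, (v S <= 1)%N.

Definition int_feasible (V : finType) (v : {set V} -> nat) (x : V -> nat) : Prop :=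
  forall S : {set V}, (v S <= \sum_(i in S) x i)%N.

Definition is_kappa (V : finType) (v : {set V} -> nat) (m : nat) : Prop :=
  (exists x, int_feasible v x /\ \sum_(i : V) x i = m) /\
  (forall x, int_feasible v x -> (m <= \sum_(i : V) x i)%N).

Definition frac_feasible (R : realFieldType) (V : finType) (v : {set V} -> nat)
    (x : V -> R) : Prop :=
  (forall i, 0 <= x i)%R /\
  (forall S : {set V}, (((v S)%:R : R) <= \sum_(i in S) x i)%R).

Definition is_kappa_f (R : realFieldType) (V : finType) (v : {set V} -> nat)
    (m : R) : Prop :=
  (exists x : V -> R, frac_feasible v x /\ (\sum_(i : V) x i)%R = m) /\
  (forall x : V -> R, frac_feasible v x -> (m <= \sum_(i : V) x i)%R).

(* Main.v *)
Require Import Defs.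
From HB Require Import structures.
From mathcomp Require Import all_boot all_order all_algebra.
From mathcomp Require Import zify.
Import Order.TTheory GRing.Theory Num.Theory.
Set Warnings "-notation-overridden,-ambiguous-paths".

Definition ivl n (a c : nat) : {set 'I_n} := [set i : 'I_n | (a <= i) && (i < c)].

Lemma card_ivl n a c : #|ivl n a c| = minn c n - a.
Proof.
elim: c => [|c IH].
  rewrite min0n sub0n; apply/eqP; rewrite cards_eq0; apply/eqP/setP => i.
  by rewrite !inE ltn0 andbF.
have [cn|nc] := ltnP c n; last first.
  have ->: ivl n a c.+1 = ivl n a c.
    apply/setP => i; rewrite !inE; have := ltn_ord i; lia.
  rewrite IH; congr (_ - _); lia.
have [ac|ca] := leqP a c; last first.
  have ->: ivl n a c.+1 = ivl n a c.
    apply/setP => i; rewrite !inE; lia.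
  rewrite IH; lia.
have ->: ivl n a c.+1 = (Ordinal cn) |: ivl n a c.
  apply/setP => i; rewrite !inE -val_eqE /=; lia.
rewrite cardsU1 IH !inE /= ltnn andbF /=; lia.
Qed.

Lemma induced_sym n r (S : {set 'I_n}) : symmetric (induced_rel (path_pow n r) S).
Proof.
move=> p q; rewrite /induced_rel /path_pow [q == p]eq_sym.
by case: (p \in S); case: (q \in S) => //=; case: (p != q) => //=; rewrite andbC.
Qed.

Lemma conn_gap n r (S : {set 'I_n}) :
  (forall u y, u \in S -> y \in S -> (u < y)%N ->
     exists z, [/\ z \in S, (u < z)%N, (z <= y)%N & (z <= u + r)%N]) ->
  connectedb (path_pow n r) S.
Proof.
move=> gap.
have main: forall d (u y : 'I_n), (y - u <= d)%N -> u \in S -> y \in S -> (u <= y)%N ->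
    connect (induced_rel (path_pow n r) S) u y.
  elim=> [|d IH] u y hd uS yS uy.
    have -> : u = y by apply/val_inj => /=; lia.
    exact: connect0.
  have [uy'|] := ltnP u y; last first.
    move=> yu; have -> : u = y by apply/val_inj => /=; lia.
    exact: connect0.
  have [z [zS uz zy zr]] := gap u y uS yS uy'.
  apply: connect_trans (connect1 _) (IH z y _ zS yS zy); last by lia.
  rewrite /induced_rel /path_pow uS zS /= -val_eqE /=.
  apply/and3P; split; lia.
apply/forallP => u; apply/implyP => uS; apply/forallP => y; apply/implyP => yS.
have [uy|yu] := leqP u y.
  exact: (main (y - u)).
rewrite (sym_connect_sym (@induced_sym n r S)).
apply: (main (u - y)) => //; lia.
Qed.

Lemma conn_diff n r a c (B : {set 'I_n}) : (#|B| < r)%N ->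
  connectedb (path_pow n r) (ivl n a c :\: B).
Proof.
move=> hB; apply: conn_gap => u y.
rewrite !inE => /andP[uB /andP[au uc]] /andP[yB /andP[ay yc]] uy.
have [hy|hy] := leqP y (u + r).
  by exists y; split => //; rewrite !inE yB ay yc.
have cU : #|ivl n u.+1 (u + r).+1| = r.
  rewrite card_ivl; have := ltn_ord y; lia.
have : ~~ (ivl n u.+1 (u + r).+1 \subset B).
  apply/negP => sub; have := subset_leq_card sub; lia.
case/subsetPn => z; rewrite !inE => /andP[uz zr] zB.
exists z; split; rewrite ?inE ?zB //=; lia.
Qed.

Lemma path_window n r (S : {set 'I_n}) b : (0 < r)%N -> forall p (x : 'I_n),
  path (induced_rel (path_pow n r) S) x p -> x \in S -> (x <= b)%N ->
  (b <= last x p)%N -> exists2 z, z \in S & ((b <= z) && (z < b + r))%N.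
Proof.
move=> r0; elim=> [|y p IH] x /=.
  move=> _ xS xb bx; exists x => //; lia.
move=> /andP[/and3P[_ yS /and3P[_ _ yx]] hp] xS xb hb.
have [yb|yb] := leqP y b; first exact: IH hp yS yb hb.
have [xb'|xb'] := eqVneq (x : nat) b.
  exists x => //; lia.
exists y => //; lia.
Qed.

Lemma bigmin_le_seq (I : eqType) (s : seq I) (P : pred I) (F : I -> nat) d i0 :
  i0 \in s -> P i0 -> (\big[minn/d]_(i <- s | P i) F i <= F i0)%N.
Proof.
elim: s => [|i s IH] //= hin hP; rewrite big_cons.
move: hin; rewrite inE => /orP[/eqP <-|hs].
  by rewrite hP geq_minl.
case: (P i); last exact: IH.
by rewrite geq_min IH // orbT.
Qed.

Lemma bigmin_le (I : finType) (P : pred I) (F : I -> nat) d i0 :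
  P i0 -> (\big[minn/d]_(i | P i) F i <= F i0)%N.
Proof. by move=> hP; apply: bigmin_le_seq => //; rewrite mem_index_enum. Qed.

Lemma hit_le n r (H : {set {set 'I_n}}) : (0 < r)%N -> thicket (path_pow n r) H ->
  (hitting_number H <= r)%N.
Proof.
move=> r0 /andP[/forallP h1 /forallP h2].
have minle T : hits H T -> (hitting_number H <= #|T|)%N.
  by move=> hT; exact: bigmin_le.
have [H0|[S1 S1H]] := set_0Vmem H.
  apply: leq_trans (minle set0 _) _; last by rewrite cards0.
  by apply/forallP => S; rewrite H0 inE.
pose mx := fun S : {set 'I_n} => (\max_(z in S) (z : nat))%N.
have [S0 S0H minS0] : exists2 S0, S0 \in H & forall S, S \in H -> (mx S0 <= mx S)%N.
  by case: (arg_minnP mx S1H) => S SH hS; exists S.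
set b := mx S0.
apply: leq_trans (minle (ivl n b (b + r)) _) _; last first.
  rewrite card_ivl; lia.
apply/forallP => S; apply/implyP => SH.
have /andP[S0n conS] := implyP (h1 S) SH.
have := implyP (forallP (implyP (h2 S) SH) S0) S0H.
case/set0Pn => x; rewrite inE => /andP[xS xS0].
have xb : (x <= b)%N by exact: (@leq_bigmax_cond _ (fun z => z \in S0) (fun z : 'I_n => (z : nat)) x xS0).
have pS : (0 < #|S|)%N by rewrite card_gt0.
have [y yS ymx] := @eq_bigmax_cond _ (fun z => z \in S) (fun z : 'I_n => (z : nat)) pS.
have by_ : (b <= y)%N by rewrite -ymx; exact: minS0.
have := implyP (forallP (implyP (forallP conS x) xS) y) yS.
case/connectP => p hp ly.
have [|z zS zw] := @path_window n r S b r0 p x hp xS xb; first by rewrite -ly.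
by apply/set0Pn; exists z; rewrite !inE zS zw.
Qed.

Lemma thicket_H0 n r : (0 < r)%N -> (3 * r <= n)%N ->
  thicket (path_pow n r) [set S : {set 'I_n} | connectedb (path_pow n r) S && (n - r < #|S|)%N]
  /\ (r <= hitting_number [set S : {set 'I_n} | connectedb (path_pow n r) S && (n - r < #|S|)%N])%N.
Proof.
move=> r0 rn; split.
  apply/andP; split.
    apply/forallP => S; apply/implyP; rewrite inE => /andP[cS hS].
    by rewrite cS andbT -card_gt0; exact: leq_ltn_trans (leq0n _) hS.
  apply/forallP => S; apply/implyP; rewrite inE => /andP[_ hS].
  apply/forallP => S'; apply/implyP; rewrite inE => /andP[_ hS'].
  apply/negP => /eqP e.
  have := cardsUI S S'; rewrite e cards0 addn0.
  have : (#|S :|: S'| <= n)%N by rewrite -[X in (_ <= X)%N](card_ord n) max_card.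
  move: hS hS'; move: (#|S|) (#|S'|) (#|S :|: S'|) => a b c; lia.
rewrite /hitting_number; elim/big_ind: _ => //.
- by rewrite card_ord; lia.
- by move=> x y hx hy; rewrite leq_min hx hy.
move=> T hT; rewrite leqNgt; apply/negP => Tr.
set S := ivl n 0 n :\: T.
have cS : #|S| = (n - #|T|)%N.
  rewrite cardsD card_ivl minnn subn0.
  have -> : ivl n 0 n :&: T = T.
    by apply/setP => i; rewrite !inE ltn_ord andbT.
  done.
have SH : S \in [set S : {set 'I_n} | connectedb (path_pow n r) S && (n - r < #|S|)%N].
  rewrite inE conn_diff //= cS; lia.
have := implyP (forallP hT S) SH.
have -> : S :&: T = set0.
  by apply/setP => i; rewrite !inE; case: (i \in T); rewrite ?andbF.
by rewrite eqxx.
Qed.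

Lemma tn n r : (0 < r)%N -> (3 * r <= n)%N -> thicket_number (path_pow n r) = r.
Proof.
move=> r0 rn; apply/eqP; rewrite eqn_leq; apply/andP; split.
  by apply/bigmax_leqP => H hH; exact: hit_le.
have [th hge] := @thicket_H0 n r r0 rn.
apply: leq_trans hge _; exact: (leq_bigmax_cond _ th).
Qed.

From mathcomp Require Import ring lra.
From Stdlib Require Import Classical.

Definition vg n r L N (S : {set 'I_n}) : nat :=
  nat_of_bool [&& connectedb (path_pow n r) S, (L <= #|S|)%N & S \subset ivl n 0 N].

Lemma big_ivl_split (R : Type) (idx : R) (op : Monoid.com_law idx) n (F : 'I_n -> R) a b c :
  (a <= b <= c)%N ->
  \big[op/idx]_(i in ivl n a c) F i =
  op (\big[op/idx]_(i in ivl n a b) F i) (\big[op/idx]_(i in ivl n b c) F i).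
Proof.
move=> /andP[ab bc]; rewrite (bigID (fun i : 'I_n => (i < b)%N)) /=.
congr (op _ _); apply: eq_bigl => i; rewrite !inE.
  by case: (leqP a i); case: (leqP b i); case: (leqP c i) => //=; lia.
by case: (leqP a i); case: (leqP b i); case: (leqP c i) => //=; lia.
Qed.

Lemma vblock n r L N a : (0 < r)%N -> (a + L <= N)%N -> (N <= n)%N ->
  vg n r L N (ivl n a (a + L)) = 1%N.
Proof.
move=> r0 aN Nn; rewrite /vg.
have -> : ivl n a (a + L) = ivl n a (a + L) :\: set0 by rewrite setD0.
rewrite conn_diff ?cards0 //= cardsD card_ivl.
have -> : ivl n a (a + L) :&: set0 = set0 by rewrite setI0.
rewrite cards0 subn0.
have -> : (minn (a + L) n - a = L)%N by lia.
rewrite leqnn /=.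
suff -> : (ivl n a (a + L) :\: set0 \subset ivl n 0 N) by [].
apply/subsetP => i; rewrite !inE /= => /andP[_ h]; lia.
Qed.

Lemma int_lb n r L N q (x : 'I_n -> nat) : (0 < r)%N -> (q * (L + r - 1) <= N)%N ->
  (N <= n)%N -> int_feasible (vg n r L N) x -> (q * r <= \sum_i x i)%N.
Proof.
move=> r0 hq hN fx; set W := (L + r - 1)%N.
have blk : forall j, (j < q)%N -> (r <= \sum_(i in ivl n (j * W) (j * W + W)) x i)%N.
  move=> j jq; rewrite leqNgt; apply/negP => hs.
  set J := ivl n (j * W) (j * W + W).
  set B := [set i in J | x i != 0%N].
  have cB : (#|B| <= \sum_(i in J) x i)%N.
    rewrite -sum1_card.
    rewrite (eq_bigl (fun i => (i \in J) && (x i != 0%N))); last by move=> i; rewrite inE.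
    rewrite big_mkcondr /=; apply: leq_sum => i _; by case: (x i).
  have hJW : (j * W + W <= N)%N.
    have := leq_mul (jq : (j.+1 <= q)%N) (leqnn W); rewrite mulSnr; lia.
  have vS : vg n r L N (J :\: B) = 1%N.
    rewrite /vg conn_diff /=; last exact: leq_ltn_trans cB hs.
    rewrite cardsD card_ivl.
    have : (#|J :&: B| <= #|B|)%N by apply: subset_leq_card; apply: subsetIr.
    move=> hJB.
    have -> : (L <= minn (j * W + W) n - j * W - #|J :&: B|)%N.
      have := leq_ltn_trans cB hs.
      move: hJB; move: (#|J :&: B|) (#|B|) => u v; rewrite /W; lia.
    suff -> : (J :\: B \subset ivl n 0 N) by [].
    apply/subsetP => i; rewrite !inE => /andP[_ /andP[_ h]]; lia.
  have := fx (J :\: B); rewrite vS big1 //.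
  move=> i; rewrite !inE => /andP[hB hJ]; move: hB; rewrite hJ /= negbK.
  by move/eqP.
have main : forall q', (q' <= q)%N -> (q' * r <= \sum_(i in ivl n 0 (q' * W)) x i)%N.
  elim=> [|q' IH] hq'; first by rewrite mul0n.
  have -> : (q'.+1 * W = q' * W + W)%N by rewrite mulSnr.
  rewrite (@big_ivl_split _ _ addn n x 0 (q' * W)); last by rewrite leq0n leq_addr.
  rewrite mulSnr; apply: leq_add; first by apply: IH; lia.
  by apply: blk; lia.
apply: leq_trans (main q (leqnn q)) _.
rewrite [X in (_ <= X)%N](bigID (mem (ivl n 0 (q * W)))) /=.
exact: leq_addr.
Qed.

Lemma frac_opt (R : realFieldType) n r L k : (0 < r)%N -> (0 < L)%N -> (k * L <= n)%N ->
  is_kappa_f (R:=R) (vg n r L (k * L)) (k%:R)%R.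
Proof.
move=> r0 L0 hn; split.
  exists (fun i : 'I_n => if (i < k * L)%N then (L%:R)^-1 else 0)%R; split; [split|].
  - by move=> i; case: ifP => _ //; rewrite invr_ge0 ler0n.
  - move=> S; rewrite /vg; case: andP => [[cS /andP[LS sub]]|_] /=; last first.
      by apply: sumr_ge0 => i _; case: ifP => _ //; rewrite invr_ge0 ler0n.
    rewrite (eq_bigr (fun _ => (L%:R)^-1)%R); last first.
      by move=> i iS; have := subsetP sub i iS; rewrite inE => /andP[_ ->].
    rewrite sumr_const.
    have -> : ((L%:R)^-1 *+ #|S| = #|S|%:R / L%:R :> R)%R by rewrite mulr_natl.
    by rewrite ler_pdivlMr ?ltr0n // !mul1r ler_nat.
  - rewrite -big_mkcond /=.
    rewrite (eq_bigl (mem (ivl n 0 (k * L)))); last by move=> i; rewrite !inE.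
    rewrite sumr_const card_ivl subn0.
    have -> : minn (k * L) n = (k * L)%N by lia.
    rewrite -[LHS]mulr_natr natrM mulrCA mulVf ?mulr1 // pnatr_eq0 -lt0n //.
move=> y [y0 fy].
have main : forall q', (q' <= k)%N -> (q'%:R <= \sum_(i in ivl n 0 (q' * L)) y i)%R.
  elim=> [|q' IH] hq'; first by rewrite mul0n; apply: sumr_ge0 => i _.
  have -> : (q'.+1 * L = q' * L + L)%N by rewrite mulSnr.
  rewrite (@big_ivl_split _ _ +%R n y 0 (q' * L)); last by rewrite leq0n leq_addr.
  rewrite -addn1 natrD; apply: lerD; first by apply: IH; lia.
  have := fy (ivl n (q' * L) (q' * L + L)); rewrite vblock //.
  have := leq_mul hq' (leqnn L); lia.
apply: le_trans (main k (leqnn k)) _.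
rewrite [X in (_ <= X)%R](bigID (mem (ivl n 0 (k * L)))) /= lerDl.
by apply: sumr_ge0 => i _.
Qed.

Lemma ex_min_P (P : nat -> Prop) m0 : P m0 ->
  exists m, P m /\ forall m', P m' -> (m <= m')%N.
Proof.
elim/ltn_ind: m0 => m0 IH Pm0.
case: (classic (exists m', P m' /\ (m' < m0)%N)) => [[m' [Pm' lt]]|h].
  exact: IH m' lt Pm'.
exists m0; split => // m' Pm'; rewrite leqNgt; apply/negP => lt; apply: h.
by exists m'.
Qed.

Theorem theorem6p3 (r n : nat) :
  (1 <= r)%N -> (3 * r <= n)%N ->
  thicket_number (path_pow n r) = r /\
  (forall k : nat, (0 < k)%N -> (k ^ 2 * (r + 1) <= n)%N ->
     exists v : {set 'I_n} -> nat,
       [/\ coalition_game (path_pow n r) v, simple_game v &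
           exists m : nat, is_kappa v m /\
             forall R : realFieldType, exists kf : R,
               is_kappa_f v kf /\
               ((1 - 2 / k%:R) * (thicket_number (path_pow n r))%:R
                  <= m%:R / kf)%R]).
Proof.
move=> r1 hn; have T := @tn n r r1 hn; split => // k k0 hk.
have key : ((k - 2) * (k * (r + 1) + r - 1) <= k * (k * (r + 1)))%N.
  case: k k0 {hk} => [|[|[|k]]] //= _; nia.
set L := (k * (r + 1))%N.
have L0 : (0 < L)%N by rewrite /L muln_gt0 k0 addn1.
have hN : (k * L <= n)%N by move: hk; rewrite /L mulnA !expnS expn0 muln1.
exists (vg n r L (k * L)); split.
- split.
  + by rewrite /vg cards0 (leqNgt L) L0 andbF.
  + by move=> S nc; rewrite /vg (negbTE nc).
  + exists (ivl n 0 (0 + L)); rewrite vblock //.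
    by rewrite add0n -{1}(mul1n L) leq_mul2r k0 orbT.
- by move=> S; rewrite /vg; case: (_ && _).
have f1 : int_feasible (vg n r L (k * L)) (fun _ => 1%N).
  move=> S; rewrite /vg; case: andP => [[_ /andP[LS _]]|] //=.
  rewrite sum1_card; exact: leq_trans L0 LS.
have [m [[x [fx sx]] hmin]] := @ex_min_P
  (fun m => exists x, int_feasible (vg n r L (k * L)) x /\ \sum_i x i = m) _
  (ex_intro _ _ (conj f1 erefl)).
exists m; split.
  split; first by exists x.
  by move=> y fy; apply: hmin; exists y.
move=> R; exists (k%:R)%R; split; first exact: frac_opt.
have hm : ((k - 2) * r <= m)%N.
  rewrite -sx; apply: (@int_lb n r L (k * L)) => //.
rewrite T ler_pdivlMr ?ltr0n //.
have -> : ((1 - 2 / k%:R) * r%:R * k%:R = (k%:R - 2) * r%:R :> R)%R.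
  field; by rewrite pnatr_eq0 -lt0n.
have [k2|k2] := leqP 2 k.
  by rewrite -(natrB _ k2) -natrM ler_nat.
have -> : k = 1%N by lia.
have : (0 <= r%:R :> R)%R by rewrite ler0n.
have : (0 <= m%:R :> R)%R by rewrite ler0n.
lra.
Qed.
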